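(* Realize $T^*S^{n-1}=\{(\gamma,p)\in\mathbb R^{2n}:\langle\gamma,\gamma\rangle=1,\ \langle\gamma,p\rangle=0\}$ via the Legendre transformation $p=-\frac1{\varepsilon^2}\mathbf I(\gamma\wedge\dot\gamma)\gamma$, let $\dot\gamma=X_\gamma(\gamma,p)$ be its inverse and $h(\gamma,p)=\frac12\langle X_\gamma(\gamma,p),p\rangle$. Then the reduced equations of the rolling of a ball with a gyroscope over a sphere without slipping and twisting (i.e. $\delta l-\mathbf{JK}(\dot\gamma,\delta\gamma)=\mathbf f(\dot\gamma,\delta\gamma)$ for all $\delta\gamma\in T_\gamma S^{n-1}$) take on $T^*S^{n-1}$ the form $$\dot\gamma=X_\gamma(\gamma,p),\qquad \dot p=\frac{1-\varepsilon}{\varepsilon^3}\mathbf I(\gamma\wedge X_\gamma)X_\gamma+\frac1{\varepsilon^2}\kappa X_\gamma+\mu\gamma,$$ where $$\mu=\frac{\varepsilon-1}{\varepsilon^3}\langle\mathbf I(\gamma\wedge X_\gamma)X_\gamma,\gamma\rangle-2h(\gamma,p)+\frac1{\varepsilon^2}\langle X_\gamma,\kappa\gamma\rangle.$$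
   Context: Fix $n\ge3$, ball radius $a$, mass $m$, $D=ma^2$, sphere radius $b$, and $\varepsilon=b/(b+a)$ or $\varepsilon=b/(b-a)$. On $so(n)$ use $\langle X,Y\rangle=-\frac12\operatorname{tr}(XY)$; on $\mathbb R^n$ the Euclidean product. For $x,y\in\mathbb R^n$, $x\wedge y=xy^T-yx^T$. $\mathbf I=\mathbb I+D\,\mathrm{Id}_{so(n)}$ is a symmetric positive definite operator on $so(n)$, $\kappa\in so(n)$ fixed. Reduced Lagrangian $l(\gamma,\dot\gamma)=-\frac1{2\varepsilon^2}\langle\mathbf I(\gamma\wedge\dot\gamma)\gamma,\dot\gamma\rangle$ on $TS^{n-1}$, $\delta l=\langle\frac{\partial l}{\partial\gamma}-\frac d{dt}\frac{\partial l}{\partial\dot\gamma},\delta\gamma\rangle$, $\mathbf{JK}(\dot\gamma,\delta\gamma)=\frac{2\varepsilon-1}{\varepsilon^3}\langle\mathbf I(\gamma\wedge\dot\gamma)\dot\gamma,\delta\gamma\rangle$, $\mathbf f(\dot\gamma,\delta\gamma)=\frac1{\varepsilon^2}\langle\dot\gamma,\kappa\delta\gamma\rangle$. *)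

(* Defs.v *)
From HB Require Import structures.
From mathcomp Require Import all_boot all_order all_algebra.
From mathcomp Require Import all_classical all_reals all_analysis.
Import Order.TTheory GRing.Theory Num.Theory.
Import numFieldNormedType.Exports.
Set Implicit Arguments. Unset Strict Implicit. Unset Printing Implicit Defensive.
Local Open Scope ring_scope.
Local Open Scope classical_set_scope.

Definition dotv (R : realType) (n : nat) (x y : 'cV[R]_n) : R := (x^T *m y) 0 0.

Definition so_inner (R : realType) (n : nat) (X Y : 'M[R]_n) : R :=
  - (2%:R)^-1 * \tr (X *m Y).

Definition skewm (R : realType) (n : nat) (X : 'M[R]_n) : Prop := X^T = - X.

Definition wedge (R : realType) (n : nat) (x y : 'cV[R]_n) : 'M[R]_n :=
  x *m y^T - y *m x^T.

Definition spd_on_so (R : realType) (n : nat) (I : 'M[R]_n -> 'M[R]_n) : Prop :=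
  [/\ (forall X, skewm X -> skewm (I X)),
      (forall X Y, skewm X -> skewm Y -> I (X + Y) = I X + I Y),
      (forall (c : R) X, skewm X -> I (c *: X) = c *: I X),
      (forall X Y, skewm X -> skewm Y -> so_inner (I X) Y = so_inner X (I Y))
    & (forall X, skewm X -> X != 0 -> 0 < so_inner (I X) X)].

Definition lagr (R : realType) (n : nat) (eps : R) (I : 'M[R]_n -> 'M[R]_n)
  (g gd : 'cV[R]_n) : R :=
  - (2%:R * eps ^+ 2)^-1 * dotv (I (wedge g gd) *m g) gd.

Definition grad (R : realType) (n : nat) (f : 'cV[R]_n -> R) (x : 'cV[R]_n)
  : 'cV[R]_n :=
  \col_i derive1 (fun h : R => f (x + h *: delta_mx i 0)) 0.

Definition dcurve (R : realType) (n : nat) (c : R -> 'cV[R]_n) (t : R)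
  : 'cV[R]_n :=
  \col_i derive1 (fun s => c s i 0) t.

Definition legendre (R : realType) (n : nat) (eps : R) (I : 'M[R]_n -> 'M[R]_n)
  (g gd : 'cV[R]_n) : 'cV[R]_n :=
  - (eps ^+ 2)^-1 *: (I (wedge g gd) *m g).

(* X_gamma(g,p): the inverse of the Legendre transformation on the fibre
   T_g S^{n-1} (the tangent vector v with <g,v> = 0 mapped to p) *)
Definition Xgam (R : realType) (n : nat) (eps : R) (I : 'M[R]_n -> 'M[R]_n)
  (g p : 'cV[R]_n) : 'cV[R]_n :=
  xget 0 [set v | dotv g v = 0 /\ legendre eps I g v = p].

Definition ham (R : realType) (n : nat) (eps : R) (I : 'M[R]_n -> 'M[R]_n)
  (g p : 'cV[R]_n) : R :=
  (2%:R)^-1 * dotv (Xgam eps I g p) p.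

(* The reduced equations at time t:
   delta l - JK(gd, dg) = f(gd, dg) for all dg in T_g S^{n-1}, where
   delta l = < dl/dg - d/dt dl/dgd, dg >. *)
Definition reduced_eq (R : realType) (n : nat) (eps : R)
  (I : 'M[R]_n -> 'M[R]_n) (kappa : 'M[R]_n) (gam : R -> 'cV[R]_n) (t : R)
  : Prop :=
  let g := gam t in
  let gd := dcurve gam t in
  let dl_dg := grad (fun x => lagr eps I x gd) g in
  let dl_dgd := fun s => grad (fun v => lagr eps I (gam s) v) (dcurve gam s) in
  forall dg : 'cV[R]_n, dotv g dg = 0 ->
    dotv (dl_dg - dcurve dl_dgd t) dg
    - ((2%:R * eps - 1) / eps ^+ 3) * dotv (I (wedge g gd) *m gd) dg
    = (eps ^+ 2)^-1 * dotv gd (kappa *m dg).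

(* Main.v *)
Require Import Defs.
From HB Require Import structures.
From mathcomp Require Import all_boot all_order all_algebra.
From mathcomp Require Import all_classical all_reals all_analysis.
From mathcomp Require Import ring lra.
Import Order.TTheory GRing.Theory Num.Theory.
Import numFieldNormedType.Exports.
Local Open Scope ring_scope.

Section D.
Variable R : realType.

Lemma dvM (f g : R -> R) t : derivable f t 1 -> derivable g t 1 ->
  derivable (fun s => f s * g s) t 1.
Proof. move=> df dg. exact: (derivableM df dg). Qed.

Lemma dvD (f g : R -> R) t : derivable f t 1 -> derivable g t 1 ->
  derivable (fun s => f s + g s) t 1.
Proof. move=> df dg. exact: (derivableD df dg). Qed.

Lemma dvC (c : R) t : derivable (fun _ : R => c) t 1.
Proof. exact: derivable_cst. Qed.

Lemma dvS k (F : 'I_k -> R -> R) t : (forall i, derivable (F i) t 1) ->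
  derivable (fun s => \sum_i F i s) t 1.
Proof.
move=> dF; have := derivable_sum dF.
by have -> : (\sum_(i < k) F i) = (fun s => \sum_i F i s) by apply/funext => s; rewrite fct_sumE.
Qed.

Lemma deM (f g : R -> R) t : derivable f t 1 -> derivable g t 1 ->
  derive1 (fun s => f s * g s) t = derive1 f t * g t + f t * derive1 g t.
Proof. move=> df dg. rewrite !derive1E (deriveM df dg) /=. by rewrite /GRing.scale /= addrC mulrC. Qed.

Lemma deS k (F : 'I_k -> R -> R) t : (forall i, derivable (F i) t 1) ->
  derive1 (fun s => \sum_i F i s) t = \sum_i derive1 (F i) t.
Proof.
move=> dF; have := derive_sum dF.
have -> : (\sum_(i < k) F i) = (fun s => \sum_i F i s) by apply/funext => s; rewrite fct_sumE.
by rewrite derive1E => ->; apply: eq_bigr => i _; rewrite derive1E.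
Qed.

Lemma derive_quad (a c d : R) : derive1 (fun h : R => a + h * c + h ^+ 2 * d) 0 = c.
Proof.
rewrite derive1E.
have -> : (fun h : R => a + h * c + h ^+ 2 * d) = (cst a + (fun h => h) * cst c) + (fun h => h) ^+ 2 * cst d.
  by apply/funext => h.
rewrite derive_val /= /GRing.scale /=.
by rewrite expr1 !(mulr0, mul0r, addr0, add0r, mulr1).
Qed.
End D.

Section Alg.
Variables (R : realType) (n : nat).
Local Notation V := 'cV[R]_n.
Local Notation e i := (delta_mx i (0 : 'I_1) : V).

Lemma dotvE (x y : V) : dotv x y = \sum_i x i 0 * y i 0.
Proof. by rewrite /dotv mxE; apply: eq_bigr => i _; rewrite mxE. Qed.

Lemma dotvC (x y : V) : dotv x y = dotv y x.
Proof. by rewrite !dotvE; apply: eq_bigr => i _; rewrite mulrC. Qed.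

Lemma dotvDr (x y z : V) : dotv x (y + z) = dotv x y + dotv x z.
Proof. by rewrite /dotv mulmxDr mxE. Qed.

Lemma dotvZr (x y : V) (c : R) : dotv x (c *: y) = c * dotv x y.
Proof. by rewrite /dotv -scalemxAr mxE. Qed.

Lemma dotvNr (x y : V) : dotv x (- y) = - dotv x y.
Proof. by rewrite -scaleN1r dotvZr mulN1r. Qed.

Lemma dotvBr (x y z : V) : dotv x (y - z) = dotv x y - dotv x z.
Proof. by rewrite dotvDr dotvNr. Qed.

Lemma dotvDl (x y z : V) : dotv (y + z) x = dotv y x + dotv z x.
Proof. by rewrite !(dotvC _ x) dotvDr. Qed.

Lemma dotvZl (x y : V) (c : R) : dotv (c *: y) x = c * dotv y x.
Proof. by rewrite !(dotvC _ x) dotvZr. Qed.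

Lemma dotvNl (x y : V) : dotv (- y) x = - dotv y x.
Proof. by rewrite !(dotvC _ x) dotvNr. Qed.

Lemma dotvBl (x y z : V) : dotv (y - z) x = dotv y x - dotv z x.
Proof. by rewrite dotvDl dotvNl. Qed.

Lemma dotv0r (x : V) : dotv x 0 = 0.
Proof. by rewrite /dotv mulmx0 mxE. Qed.

Lemma dotv_e i (y : V) : dotv (e i) y = y i 0.
Proof.
rewrite dotvE (bigD1 i) //= big1 ?addr0; first by rewrite mxE !eqxx mul1r.
by move=> j /negbTE ji; rewrite mxE ji mul0r.
Qed.

Lemma dotv_skew (B : 'M[R]_n) (x y : V) : skewm B ->
  dotv y (B *m x) = - dotv x (B *m y).
Proof.
move=> sB; rewrite /dotv.
transitivity (((y^T *m (B *m x))^T) 0 0); first by rewrite [RHS]mxE.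
by rewrite !trmx_mul trmxK sB mulmxN mulNmx mulmxA mxE.
Qed.

Lemma dotv_skew0 (B : 'M[R]_n) (x : V) : skewm B -> dotv x (B *m x) = 0.
Proof.
move=> sB; have := @dotv_skew B x x sB => /eqP; rewrite -addr_eq0 -mulr2n.
by rewrite -mulr_natr mulf_eq0 pnatr_eq0 orbF => /eqP.
Qed.

Lemma dotv_eq0 (x : V) : dotv x x = 0 -> x = 0.
Proof.
rewrite dotvE => /eqP; rewrite psumr_eq0; last by move=> i _; rewrite -expr2 sqr_ge0.
move=> /allP H; apply/matrixP => i j; rewrite (ord1 j) mxE.
by have /(_ (mem_index_enum i)) := H i; rewrite implyTb mulf_eq0 orbb => /eqP.
Qed.

Lemma so_innerC (X Y : 'M[R]_n) : so_inner X Y = so_inner Y X.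
Proof. by rewrite /so_inner mxtrace_mulC. Qed.

Lemma tr1 (A : 'M[R]_1) : \tr A = A 0 0.
Proof. by rewrite /mxtrace big_ord1. Qed.

Lemma so_inner_wedge (B : 'M[R]_n) (x y : V) : skewm B ->
  so_inner B (wedge x y) = - dotv y (B *m x).
Proof.
move=> sB; rewrite /so_inner /wedge mulmxBr linearB /= !mulmxA.
rewrite (mxtrace_mulC (B *m x) y^T) (mxtrace_mulC (B *m y) x^T) !tr1.
rewrite -/(dotv y (B *m x)) -/(dotv x (B *m y)) (dotv_skew _ _ _ sB).
have h2 : (2:R) != 0 by rewrite pnatr_eq0.
by field.
Qed.

Lemma skewD (X Y : 'M[R]_n) : skewm X -> skewm Y -> skewm (X + Y).
Proof. by rewrite /skewm => hX hY; rewrite linearD /= hX hY opprD. Qed.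

Lemma skewZ (X : 'M[R]_n) c : skewm X -> skewm (c *: X).
Proof. by rewrite /skewm => hX; rewrite linearZ /= hX scalerN. Qed.

Lemma skew0 : skewm (0 : 'M[R]_n).
Proof. by rewrite /skewm trmx0 oppr0. Qed.

Lemma wedge_skew (x y : V) : skewm (wedge x y).
Proof. by rewrite /skewm /wedge linearB /= !trmx_mul !trmxK opprB. Qed.

Lemma wedgeDl (x y v : V) : wedge (x + y) v = wedge x v + wedge y v.
Proof. by rewrite /wedge mulmxDl linearD /= mulmxDr opprD addrACA. Qed.

Lemma wedgeZl (x v : V) c : wedge (c *: x) v = c *: wedge x v.
Proof. by rewrite /wedge linearZ /= -scalemxAl -scalemxAr scalerBr. Qed.

Lemma wedgeDr (x y v : V) : wedge v (x + y) = wedge v x + wedge v y.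
Proof. by rewrite /wedge mulmxDl linearD /= mulmxDr opprD addrACA. Qed.

Lemma wedgeZr (x v : V) c : wedge v (c *: x) = c *: wedge v x.
Proof. by rewrite /wedge linearZ /= -scalemxAl -scalemxAr scalerBr. Qed.

Variable I : 'M[R]_n -> 'M[R]_n.
Hypothesis hI : spd_on_so I.

Lemma I_lin (X Y : 'M[R]_n) c : skewm X -> skewm Y -> I (X + c *: Y) = I X + c *: I Y.
Proof.
case: hI => _ hD hZ _ _ sX sY; rewrite hD //; first by rewrite hZ.
exact: skewZ.
Qed.

Lemma I_skew X : skewm X -> skewm (I X).
Proof. by case: hI => h *; apply: h. Qed.

Lemma I_sym X Y : skewm X -> skewm Y -> so_inner (I X) Y = so_inner X (I Y).
Proof. by case: hI => _ _ _ h _; apply: h. Qed.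

Lemma grad_quad (f : V -> R) (x c : V) :
  (forall i, exists a d, forall h, f (x + h *: e i) = a + h * c i 0 + h ^+ 2 * d) ->
  grad f x = c.
Proof.
move=> H; apply/matrixP => i j; rewrite (ord1 j) mxE.
have [a [d Hf]] := H i.
by rewrite (_ : (fun h => f (x + h *: e i)) = fun h => a + h * c i 0 + h ^+ 2 * d) ?derive_quad //; apply/funext => h; exact: Hf.
Qed.

Lemma expand1 (A E : 'M[R]_n) (x e v : V) h :
  dotv ((A + h *: E) *m (x + h *: e)) v =
  dotv (A *m x) v + h * (dotv (A *m e) v + dotv (E *m x) v) + h ^+ 2 * dotv (E *m e) v.
Proof.
rewrite mulmxDl !mulmxDr -!scalemxAl -!scalemxAr scalerA !dotvDl !dotvZl.
by ring.
Qed.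

Lemma expand2 (A F : 'M[R]_n) (x e v : V) h :
  dotv ((A + h *: F) *m x) (v + h *: e) =
  dotv (A *m x) v + h * (dotv (A *m x) e + dotv (F *m x) v) + h ^+ 2 * dotv (F *m x) e.
Proof.
rewrite mulmxDl -!scalemxAl !dotvDl !dotvZl !dotvDr !dotvZr.
by ring.
Qed.

Variable eps : R.
Hypothesis eps0 : eps != 0.

Lemma grad_x (x v : V) :
  grad (fun y => lagr eps I y v) x = (eps ^+ 2)^-1 *: (I (wedge x v) *m v).
Proof.
apply: grad_quad => i.
set A := I (wedge x v); set E := I (wedge (e i) v).
exists (- (2%:R * eps ^+ 2)^-1 * dotv (A *m x) v).
exists (- (2%:R * eps ^+ 2)^-1 * dotv (E *m (e i)) v) => h.
have h2 : (2:R) != 0 by rewrite pnatr_eq0.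
have sA : skewm A by apply: I_skew; exact: wedge_skew.
have sE : skewm E by apply: I_skew; exact: wedge_skew.
have key : dotv (A *m e i) v + dotv (E *m x) v = -2%:R * (A *m v) i 0.
  rewrite dotvC (dotv_skew _ _ _ sA) dotv_e [dotv (E *m x) v]dotvC -[dotv v (E *m x)]opprK -so_inner_wedge //.
  rewrite I_sym; try exact: wedge_skew.
  rewrite so_innerC so_inner_wedge // -/A opprK (dotv_skew _ _ _ sA) dotv_e.
  by ring.
have key' : dotv (A *m e i) v = -2%:R * (A *m v) i 0 - dotv (E *m x) v.
  by rewrite -key addrK.
rewrite /lagr wedgeDl wedgeZl I_lin; try exact: wedge_skew.
rewrite -/A -/E.
rewrite mulmxDl !mulmxDr -!scalemxAl -!scalemxAr scalerA !dotvDl !dotvZl key'.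
rewrite !mxE.
by field.
Qed.

Lemma grad_v (x v : V) :
  grad (fun w => lagr eps I x w) v = legendre eps I x v.
Proof.
apply: grad_quad => i.
set A := I (wedge x v); set F := I (wedge x (e i)).
exists (- (2%:R * eps ^+ 2)^-1 * dotv (A *m x) v).
exists (- (2%:R * eps ^+ 2)^-1 * dotv (F *m x) (e i)) => h.
have h2 : (2:R) != 0 by rewrite pnatr_eq0.
have sA : skewm A by apply: I_skew; exact: wedge_skew.
have sF : skewm F by apply: I_skew; exact: wedge_skew.
have key : dotv (A *m x) (e i) + dotv (F *m x) v = 2%:R * (A *m x) i 0.
  rewrite dotvC dotv_e [dotv (F *m x) v]dotvC -[dotv v (F *m x)]opprK -so_inner_wedge //.
  rewrite I_sym; try exact: wedge_skew.
  rewrite so_innerC so_inner_wedge //.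
  rewrite opprK dotv_e -/A.
  by ring.
have key' : dotv (A *m x) (e i) = 2%:R * (A *m x) i 0 - dotv (F *m x) v.
  by rewrite -key addrK.
rewrite /lagr wedgeDr wedgeZr I_lin; try exact: wedge_skew.
rewrite -/A -/F.
rewrite mulmxDl -!scalemxAl !dotvDl !dotvZl !dotvDr !dotvZr key'.
rewrite /legendre !mxE.
by field.
Qed.


Lemma I0 : I 0 = 0.
Proof. case: hI => _ _ hZ _ _; by rewrite -(scale0r (0 : 'M[R]_n)) hZ ?scale0r //; exact: skew0. Qed.

Lemma I_sum (F : 'I_n -> 'M[R]_n) : (forall j, skewm (F j)) ->
  skewm (\sum_j F j) /\ I (\sum_j F j) = \sum_j I (F j).
Proof.
move=> sF; apply: (big_rec2 (fun X Y => skewm X /\ I X = Y)); first by split; [exact: skew0|exact: I0].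
move=> j X Y _ [sX <-]; split; first exact: skewD.
by rewrite -[X in F j + X]scale1r I_lin // scale1r.
Qed.

Lemma sum_delta (F : 'I_n -> R) a : \sum_j (a == j)%:R * F j = F a.
Proof.
rewrite (bigD1 a) //= eqxx mul1r big1 ?addr0 //.
by move=> j /negbTE; rewrite eq_sym => ->; rewrite mul0r.
Qed.

Lemma wedge_entry (x y : V) a b : wedge x y a b = x a 0 * y b 0 - y a 0 * x b 0.
Proof. by rewrite /wedge !mxE !big_ord1 !mxE. Qed.

Lemma wedge_exp (x y : V) :
  wedge x y = \sum_j \sum_k (x j 0 * y k 0) *: wedge (e j) (e k).
Proof.
apply/matrixP => a b; rewrite wedge_entry summxE.
under eq_bigr => j _ do rewrite summxE.
under eq_bigr => j _ do under eq_bigr => k _ do rewrite mxE wedge_entry !mxE !eqxx !andbT.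
under eq_bigr => j _ do under eq_bigr => k _ do rewrite mulrBr.
under eq_bigr => j _ do rewrite sumrB.
rewrite sumrB; congr (_ - _).
  rewrite -(sum_delta (fun j => x j 0 * y b 0) a); apply: eq_bigr => j _.
  transitivity (\sum_k (b == k)%:R * ((a == j)%:R * (x j 0 * y k 0))).
    by rewrite sum_delta.
  by apply: eq_bigr => k _; ring.
rewrite -(sum_delta (fun j => y a 0 * x j 0) b); apply: eq_bigr => j _.
transitivity (\sum_k (a == k)%:R * ((b == j)%:R * (y k 0 * x j 0))).
  by rewrite sum_delta; ring.
by apply: eq_bigr => k _; ring.
Qed.


Lemma I_wedge_exp (x y : V) :
  I (wedge x y) = \sum_j \sum_k (x j 0 * y k 0) *: I (wedge (e j) (e k)).
Proof.
have skk : forall j k, skewm ((x j 0 * y k 0) *: wedge (e j) (e k)).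
  by move=> j k; apply: skewZ; exact: wedge_skew.
have sk : forall j, skewm (\sum_k (x j 0 * y k 0) *: wedge (e j) (e k)).
  by move=> j; exact: (@I_sum _ (skk j)).1.
rewrite wedge_exp (@I_sum _ sk).2; apply: eq_bigr => j _.
rewrite (@I_sum _ (skk j)).2.
apply: eq_bigr => k _; case: hI => _ _ hZ _ _; by rewrite hZ //; exact: wedge_skew.
Qed.

Lemma dv_pI (a b : R -> V) t :
  (forall i, derivable (fun s => a s i 0) t 1) ->
  (forall i, derivable (fun s => b s i 0) t 1) ->
  forall i, derivable (fun s => (I (wedge (a s) (b s)) *m a s) i 0) t 1.
Proof.
move=> da db i.
have -> : (fun s => (I (wedge (a s) (b s)) *m a s) i 0) = fun s =>
  \sum_l (\sum_j \sum_k (a s j 0 * b s k 0) * I (wedge (e j) (e k)) i l) * a s l 0.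
  apply/funext => s; rewrite mxE; apply: eq_bigr => l _; rewrite I_wedge_exp summxE.
  congr (_ * _); apply: eq_bigr => j _; rewrite summxE; apply: eq_bigr => k _.
  by rewrite mxE.
apply: dvS => l; apply: dvM => //; apply: dvS => j; apply: dvS => k.
apply: dvM; last exact: dvC.
exact: dvM.
Qed.


Lemma ddot (a b : R -> V) t :
  (forall i, derivable (fun s => a s i 0) t 1) ->
  (forall i, derivable (fun s => b s i 0) t 1) ->
  derive1 (fun s => dotv (a s) (b s)) t = dotv (dcurve a t) (b t) + dotv (a t) (dcurve b t).
Proof.
move=> da db.
have -> : (fun s => dotv (a s) (b s)) = fun s => \sum_i a s i 0 * b s i 0.
  by apply/funext => s; rewrite dotvE.
rewrite deS; last by move=> i; exact: dvM.
rewrite !dotvE -big_split; apply: eq_bigr => i _.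
by rewrite deM // !mxE.
Qed.

Lemma legendre_inj (g u : V) : dotv g g = 1 -> dotv g u = 0 ->
  I (wedge g u) *m g = 0 -> u = 0.
Proof.
move=> gg gu H.
have sW : skewm (wedge g u) by exact: wedge_skew.
have q : so_inner (I (wedge g u)) (wedge g u) = 0.
  by rewrite so_inner_wedge ?H ?dotv0r ?oppr0 //; exact: I_skew.
have W0 : wedge g u = 0.
  apply/eqP; apply: contraT => nz; case: hI => _ _ _ _ pd.
  by have := pd _ sW nz; rewrite q ltxx.
have : wedge g u *m g = 0 by rewrite W0 mul0mx.
have ug : u^T *m g = 0.
  apply/matrixP => i j; rewrite (ord1 i) (ord1 j) [RHS]mxE.
  by rewrite -/(dotv u g) dotvC gu.
have g1 : g^T *m g = 1%:M.
  apply/matrixP => i j; rewrite (ord1 i) (ord1 j) [RHS]mxE /=.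
  by rewrite -/(dotv g g) gg.
rewrite /wedge mulmxBl -!mulmxA ug g1 mulmx0 mulmx1 sub0r => /eqP.
by rewrite oppr_eq0 => /eqP.
Qed.

Lemma Xgam_leg (g v : V) : dotv g g = 1 -> dotv g v = 0 ->
  Xgam eps I g (legendre eps I g v) = v.
Proof.
move=> gg gv; apply: xget_unique; first by split.
move=> y [gy ly]; apply/eqP; rewrite -subr_eq0; apply/eqP.
apply: legendre_inj gg _ _; first by rewrite dotvBr gy gv subrr.
have ne : - (eps ^+ 2)^-1 != 0 by rewrite oppr_eq0 invr_eq0 expf_neq0.
have := ly; rewrite /legendre => /(scalerI ne) e1.
rewrite -scaleN1r wedgeDr wedgeZr I_lin; try exact: wedge_skew.
by rewrite mulmxDl -scalemxAl e1 scaleN1r subrr.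
Qed.

Lemma core (g gd pd P : V) (A K : 'M[R]_n) : skewm K -> dotv g g = 1 ->
  dotv pd g = - dotv P gd ->
  let mu := (eps - 1) / eps ^+ 3 * dotv (A *m gd) g - 2%:R * ((2%:R)^-1 * dotv gd P)
            + (eps ^+ 2)^-1 * dotv gd (K *m g) in
  (forall dg, dotv g dg = 0 ->
     dotv ((eps ^+ 2)^-1 *: (A *m gd) - pd) dg - ((2%:R * eps - 1) / eps ^+ 3) * dotv (A *m gd) dg
     = (eps ^+ 2)^-1 * dotv gd (K *m dg)) <->
  pd = ((1 - eps) / eps ^+ 3) *: (A *m gd) + (eps ^+ 2)^-1 *: (K *m gd) + mu *: g.
Proof.
move=> sK gg hpd mu.
set W := ((1 - eps) / eps ^+ 3) *: (A *m gd) + (eps ^+ 2)^-1 *: (K *m gd) + mu *: g.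
have h2 : (2:R) != 0 by rewrite pnatr_eq0.
have form : forall dg, dotv ((eps ^+ 2)^-1 *: (A *m gd) - pd) dg - ((2%:R * eps - 1) / eps ^+ 3) * dotv (A *m gd) dg
     - (eps ^+ 2)^-1 * dotv gd (K *m dg) = dotv (W - pd) dg - mu * dotv g dg.
  move=> dg; rewrite /W !dotvBl !dotvDl !dotvZl (dotvC (K *m gd)) (dotv_skew _ _ _ sK) (dotvC g).
  by field.
split => [H|Hpd] ; last first.
  move=> dg gdg; apply/eqP; rewrite -subr_eq0; apply/eqP.
  rewrite form; have -> : W - pd = 0 by rewrite Hpd subrr.
  by rewrite dotvE big1 ?gdg ?mulr0 ?subrr // => i _; rewrite mxE mul0r.
have Dg : dotv (W - pd) g = 0.
  rewrite /W /mu !dotvBl !dotvDl !dotvZl hpd gg (dotvC (K *m gd)) (dotv_skew _ _ _ sK) (dotvC P).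
  by field.
have Hd : forall dg, dotv g dg = 0 -> dotv (W - pd) dg = 0.
  move=> dg gdg; have := form dg; rewrite H // subrr gdg mulr0 subr0 => <-. by [].
set D := W - pd in Dg Hd.
have : dotv D (D - dotv g D *: g) = 0.
  by apply: Hd; rewrite dotvBr dotvZr gg mulr1 subrr.
rewrite dotvBr dotvZr Dg mulr0 subr0 => /dotv_eq0 /eqP.
by rewrite subr_eq0 => /eqP.
Qed.

End Alg.

Theorem proposition7p6 (R : realType) (n : nat) (hn : (3 <= n)%N)
  (a m b eps : R) (ha : 0 < a) (hm : 0 < m) (hb : 0 < b)
  (heps : eps = b / (b + a) \/ (b != a /\ eps = b / (b - a)))
  (II : 'M[R]_n -> 'M[R]_n)
  (hI : spd_on_so (fun X => II X + (m * a ^+ 2) *: X))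
  (kappa : 'M[R]_n) (hkappa : skewm kappa)
  (gam : R -> 'cV[R]_n)
  (hsph : forall s, dotv (gam s) (gam s) = 1)
  (hd1 : forall (i : 'I_n) s, derivable (fun u => gam u i 0) s 1)
  (hd2 : forall (i : 'I_n) s,
      derivable (derive1 (fun u => gam u i 0)) s 1)
  (t : R) :
  let I := fun X => II X + (m * a ^+ 2) *: X in
  let p := fun s => legendre eps I (gam s) (dcurve gam s) in
  let g := gam t in
  let Xv := Xgam eps I g (p t) in
  let mu := (eps - 1) / eps ^+ 3 * dotv (I (wedge g Xv) *m Xv) g
            - 2%:R * ham eps I g (p t)
            + (eps ^+ 2)^-1 * dotv Xv (kappa *m g) in
  reduced_eq eps I kappa gam t <->
  (dcurve gam t = Xv /\
   dcurve p t = ((1 - eps) / eps ^+ 3) *: (I (wedge g Xv) *m Xv)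
                + (eps ^+ 2)^-1 *: (kappa *m Xv) + mu *: g).
Proof.
move=> I p g Xv mu.
have eps0 : eps != 0.
  case: heps => [->|[ba ->]]; rewrite mulf_eq0 negb_or invr_eq0 gt_eqF //.
    by rewrite gt_eqF // addr_gt0.
  by rewrite subr_eq0.
have hI' : spd_on_so I by exact: hI.
set gd := dcurve gam t.
have dg1 : forall i, derivable (fun s => gam s i 0) t 1 by move=> i; exact: hd1.
have dg2 : forall i, derivable (fun s => dcurve gam s i 0) t 1.
  move=> i; have -> : (fun s => dcurve gam s i 0) = derive1 (fun u => gam u i 0).
    by apply/funext => s; rewrite mxE.
  exact: hd2.
have F1 : dotv g gd = 0.
  have := @ddot _ _ _ _ _ dg1 dg1.
  have -> : (fun s => dotv (gam s) (gam s)) = fun _ => 1 by apply/funext => s; exact: hsph.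
  rewrite derive1_cst dotvC -/g -/gd => /eqP; rewrite eq_sym -mulr2n -mulr_natr mulf_eq0 pnatr_eq0 orbF.
  by move/eqP.
have XvE : Xv = gd by rewrite /Xv /p (@Xgam_leg _ _ _ hI' _ eps0) //; exact: hsph.
have dp : forall i, derivable (fun s => p s i 0) t 1.
  move=> i; have -> : (fun s => p s i 0) = fun s => (- (eps ^+ 2)^-1) * (I (wedge (gam s) (dcurve gam s)) *m gam s) i 0.
    by apply/funext => s; rewrite /p /legendre mxE.
  by apply: dvM; [exact: dvC | exact: dv_pI].
have F3 : dotv (dcurve p t) g = - dotv (p t) gd.
  have := @ddot _ _ _ _ _ dp dg1.
  have -> : (fun s => dotv (p s) (gam s)) = fun _ => 0.
    apply/funext => s; rewrite /p /legendre dotvZl dotvC dotv_skew0 ?mulr0 //.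
    by apply: (@I_skew _ _ _ hI'); exact: wedge_skew.
  by rewrite derive1_cst -/g -/gd => /eqP; rewrite eq_sym addr_eq0 => /eqP.
rewrite /reduced_eq /= -/g -/gd.
rewrite (@grad_x _ _ _ hI' _ eps0).
have -> : (fun s => grad (fun v => lagr eps I (gam s) v) (dcurve gam s)) = p.
  by apply/funext => s; rewrite (@grad_v _ _ _ hI' _ eps0).
rewrite /mu /ham -/Xv XvE.
have := @core _ _ eps eps0 g gd (dcurve p t) (p t) (I (wedge g gd)) kappa hkappa (hsph t) F3.
move=> /= ->.
by split => [->|[_ ->]].
Qed.
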